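(* For $i=1,2$ let $A_i\in M_{g_i,n_i}(\mathbb{Z})$ be a simple totally unimodular matrix and let $Q_i$ be a positive definite quadratic form of rank $g_i$ (a symmetric $g_i\times g_i$ real matrix) which is well-suited for $A_i$. Then $$Q=\begin{pmatrix}Q_1&0\\0&Q_2\end{pmatrix}\ \text{ is well-suited for }\ A=\begin{pmatrix}A_1&0\\0&A_2\end{pmatrix}.$$
   Context: A real matrix is totally unimodular if every square submatrix has determinant $-1,0$ or $1$; it is simple if it has no zero column and no two proportional columns. For a simple totally unimodular $A\in M_{g,n}(\mathbb{Z})$, a symmetric matrix $Q\in M_{g,g}(\mathbb{R})$ is well-suited for $A$ if $Q$ is positive definite and for every $\xi\in\mathbb{Z}^g\setminus\{0\}$ one has $Q(\xi)=\xi^tQ\xi\ge1$, with equality if and only if $\xi$ or $-\xi$ is a column vector of $A$. *)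

(* Defs.v *)
From HB Require Import structures.
From mathcomp Require Import all_boot all_order all_algebra.
From mathcomp Require Import reals.
Set Implicit Arguments. Unset Strict Implicit. Unset Printing Implicit Defensive.
Import Order.TTheory GRing.Theory Num.Theory.
Local Open Scope ring_scope.

Definition totally_unimodular (g n : nat) (A : 'M[int]_(g, n)) : Prop :=
  forall (k : nat) (f : 'I_k -> 'I_g) (h : 'I_k -> 'I_n),
    injective f -> injective h ->
    \det (mxsub f h A) \in [:: -1; 0; 1].

Definition simple_mx (g n : nat) (A : 'M[int]_(g, n)) : Prop :=
  (forall j : 'I_n, col j A != 0) /\
  (forall j j' : 'I_n, j != j' ->
     ~ exists c : rat, map_mx intr (col j A) = c *: map_mx intr (col j' A)).

Definition qform (R : realType) (g : nat) (Q : 'M[R]_g) (x : 'cV[R]_g) : R :=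
  (x^T *m Q *m x) 0 0.

Definition pos_def (R : realType) (g : nat) (Q : 'M[R]_g) : Prop :=
  forall x : 'cV[R]_g, x != 0 -> 0 < qform Q x.

Definition well_suited (R : realType) (g n : nat)
    (A : 'M[int]_(g, n)) (Q : 'M[R]_g) : Prop :=
  Q^T = Q /\ pos_def Q /\
  forall xi : 'cV[int]_g, xi != 0 ->
    1 <= qform Q (map_mx intr xi) /\
    (qform Q (map_mx intr xi) = 1 <->
       exists j : 'I_n, xi = col j A \/ - xi = col j A).

(* Main.v *)
Require Import Defs.
From HB Require Import structures.
From mathcomp Require Import all_boot all_order all_algebra.
From mathcomp Require Import reals.
From mathcomp Require Import lra.
Import Order.TTheory GRing.Theory Num.Theory.
Local Open Scope ring_scope.

Lemma qform_block (R : realType) g1 g2 (Q1 : 'M[R]_g1) (Q2 : 'M[R]_g2) x1 x2 :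
  qform (block_mx Q1 0 0 Q2) (col_mx x1 x2) = qform Q1 x1 + qform Q2 x2.
Proof.
rewrite /qform tr_col_mx mul_row_block !mulmx0 addr0 add0r mul_row_col.
by rewrite mxE.
Qed.

Lemma qform0 (R : realType) g (Q : 'M[R]_g) : qform Q (map_mx intr (0 : 'cV[int]_g)) = 0.
Proof. by rewrite map_mx0 /qform mulmx0 mxE. Qed.

Lemma col_block (g1 n1 g2 n2 : nat) (A1 : 'M[int]_(g1, n1)) (A2 : 'M[int]_(g2, n2))
  (j : 'I_(n1 + n2)) :
  (exists j1, col j (block_mx A1 0 0 A2) = col_mx (col j1 A1) 0) \/
  (exists j2, col j (block_mx A1 0 0 A2) = col_mx 0 (col j2 A2)).
Proof.
rewrite block_mxEh.
case: (split_ordP j) => k ->.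
  by left; exists k; rewrite colKl col_col_mx col0.
by right; exists k; rewrite colKr col_col_mx col0.
Qed.

Theorem lemma4p2p3 (R : realType) (g1 n1 g2 n2 : nat)
  (A1 : 'M[int]_(g1, n1)) (A2 : 'M[int]_(g2, n2))
  (Q1 : 'M[R]_g1) (Q2 : 'M[R]_g2) :
  totally_unimodular A1 -> simple_mx A1 ->
  totally_unimodular A2 -> simple_mx A2 ->
  Q1^T = Q1 -> pos_def Q1 -> well_suited A1 Q1 ->
  Q2^T = Q2 -> pos_def Q2 -> well_suited A2 Q2 ->
  well_suited (block_mx A1 0 0 A2) (block_mx Q1 0 0 Q2).
Proof.
move=> _ _ _ _ S1 P1 [_ [_ W1]] S2 P2 [_ [_ W2]].
split; first by rewrite tr_block_mx S1 S2 !trmx0.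
split.
  move=> x; rewrite -[x]vsubmxK col_mx_eq0 qform_block.
  have q1 := P1 (usubmx x); have q2 := P2 (dsubmx x).
  case: (eqVneq (usubmx x) 0) => [->|h1]; case: (eqVneq (dsubmx x) 0) => [->|h2] //=.
  - by rewrite /qform mulmx0 mxE add0r => _; apply: q2.
  - by rewrite [qform Q2 0]/qform mulmx0 mxE addr0 => _; apply: q1.
  - by move=> _; apply: addr_gt0; [apply: q1|apply: q2].
move=> xi.
have [x1 [x2 ->]] : exists x1 x2, xi = col_mx x1 x2 by exists (usubmx xi), (dsubmx xi); rewrite vsubmxK.
rewrite col_mx_eq0 map_col_mx qform_block.
have cb j : (exists j1, col j (block_mx A1 0 0 A2) = col_mx (col j1 A1) 0) \/
  (exists j2, col j (block_mx A1 0 0 A2) = col_mx 0 (col j2 A2)) by apply: col_block.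
case: (eqVneq x1 0) => [->|h1]; case: (eqVneq x2 0) => [->|h2] //= _.
- rewrite qform0 add0r; have [Ha Hb] := W2 _ h2; split => //.
  rewrite Hb; split.
    case=> jj [] E; exists (rshift n1 jj);
      rewrite block_mxEh colKr col_col_mx col0 ?opp_col_mx ?oppr0 -E //.
    by left.
    by right.
  case=> j; case: (cb j) => [][k ->] [] E; move: E;
    rewrite ?opp_col_mx ?oppr0 => /eq_col_mx [E1 E2].
  + by move: h2; rewrite E2 eqxx.
  + by move: h2; rewrite -oppr_eq0 E2 eqxx.
  + by exists k; left.
  + by exists k; right.
- rewrite qform0 addr0; have [Ha Hb] := W1 _ h1; split => //.
  rewrite Hb; split.
    case=> jj [] E; exists (lshift n2 jj);
      rewrite block_mxEh colKl col_col_mx col0 ?opp_col_mx ?oppr0 -E //.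
    by left.
    by right.
  case=> j; case: (cb j) => [][k ->] [] E; move: E;
    rewrite ?opp_col_mx ?oppr0 => /eq_col_mx [E1 E2].
  + by exists k; left.
  + by exists k; right.
  + by move: h1; rewrite E1 eqxx.
  + by move: h1; rewrite -oppr_eq0 E1 eqxx.
- have [Ha _] := W1 _ h1; have [Hb _] := W2 _ h2.
  have H2 : 2 <= qform Q1 (map_mx intr x1) + qform Q2 (map_mx intr x2).
    by rewrite -[2]/(1 + 1); apply: lerD.
  split; first by apply: le_trans H2; rewrite ler1n.
  split.
    by move=> E; move: H2; rewrite E; lra.
  case=> j; case: (cb j) => [][k ->] [] E; move: E;
    rewrite ?opp_col_mx ?oppr0 => /eq_col_mx [E1 E2].
  + by move: h2; rewrite E2 eqxx.
  + by move: h2; rewrite -oppr_eq0 E2 eqxx.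
  + by move: h1; rewrite E1 eqxx.
  + by move: h1; rewrite -oppr_eq0 E1 eqxx.
Qed.
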